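(* Let $\varrho$ be a state on $\mathcal H_A\otimes\mathcal H_B\otimes\mathcal H_C$ with $\mathcal H_A=\mathcal H_B$, and let $F_{AB}$ be the flip operator exchanging $A$ and $B$. If $F_{AB}\,\mathrm{Tr}_C(\varrho)=\pm\mathrm{Tr}_C(\varrho)$, then $(F_{AB}\otimes\mathbb 1_C)\varrho=\pm\varrho$ (with the same sign).
   Context: $F_{AB}=\sum_{i,j}|ij\rangle\langle ji|$ on $\mathcal H_A\otimes\mathcal H_B$ (finite-dimensional Hilbert spaces). *)

(* Defs.v *)
From HB Require Import structures.
From mathcomp Require Import all_boot all_order all_algebra.
Set Implicit Arguments. Unset Strict Implicit. Unset Printing Implicit Defensive.
Import Order.TTheory GRing.Theory Num.Theory.
Local Open Scope ring_scope.

(* Operators on a finite-dimensional Hilbert space C^T with orthonormal basis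
   indexed by a finite type T, given by their matrix entries <x|X|y> = X x y. *)
Definition op (C : numClosedFieldType) (T : finType) := T -> T -> C.

Definition psd (C : numClosedFieldType) (T : finType) (X : op C T) : Prop :=
  forall v : T -> C, 0 <= \sum_(x : T) \sum_(y : T) (v x)^* * X x y * v y.

Definition trace (C : numClosedFieldType) (T : finType) (X : op C T) : C :=
  \sum_(x : T) X x x.

Definition is_state (C : numClosedFieldType) (T : finType) (X : op C T) : Prop :=
  psd X /\ trace X = 1.

(* H_A (x) H_B (x) H_C with H_A = H_B = C^n, H_C = C^m; basis |a,b,c> *)
Notation ABC n m := (prod (prod 'I_n 'I_n) 'I_m).
Notation AB n := (prod 'I_n 'I_n).

Definition ptraceC (C : numClosedFieldType) (n m : nat) (rho : op C (ABC n m))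
  : op C (AB n) :=
  fun x y => \sum_(c : 'I_m) rho (x, c) (y, c).

Definition flipAB (C : numClosedFieldType) (n : nat) : op C (AB n) :=
  fun x y => (x == (y.2, y.1))%:R.

Definition opmul (C : numClosedFieldType) (T : finType) (X Y : op C T) : op C T :=
  fun x y => \sum_(z : T) X x z * Y z y.

Definition flipAB_idC (C : numClosedFieldType) (n m : nat) : op C (ABC n m) :=
  fun x y => (@flipAB C n x.1 y.1) * (x.2 == y.2)%:R.

(* Main.v *)
Require Import Defs.
From HB Require Import structures.
From mathcomp Require Import all_boot all_order all_algebra.
From mathcomp Require Import ring.
From Stdlib Require Import FunctionalExtensionality.
Import Order.TTheory GRing.Theory Num.Theory.
Local Open Scope ring_scope.

Lemma key (C : numClosedFieldType) (a b c : C) : 0 <= c ->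
  (forall t : C, 0 <= t * a + t^* * b + t^* * t * c) -> a = 0.
Proof.
move=> c0 H.
have cc : c^* = c by apply: geC0_conj.
have h1 := H 1; rewrite conjC1 !mul1r in h1.
have h2 := H 'i; rewrite conjCi !mulNr mulCii mulN1r opprK in h2.
have r1 := geC0_conj h1; have r2 := geC0_conj h2.
rewrite !rmorphD /= cc in r1; move/addIr: r1 => r1.
rewrite !rmorphD !rmorphN !rmorphM /= conjCi cc in r2; move/addIr: r2 => r2.
have r2' : b^* - a^* = a - b.
  apply: (mulfI (neq0Ci C)).
  have -> : 'i * (b^* - a^*) = - 'i * a^* - - 'i * b^* by ring.
  by rewrite r2; ring.
have ba : b^* = a.
  apply/eqP; rewrite -subr_eq0.
  have : (b^* - a) *+ 2 == 0.
    have -> : (b^* - a) *+ 2 = (b^* - a^* - (a - b)) + (a^* + b^* - (a + b)) by ring.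
    by rewrite r2' r1 !subrr addr0.
  by rewrite mulrn_eq0.
have bE : b = a^* by rewrite -ba conjCK.
rewrite {}bE in H.
set s := (1 + c)^-1.
have c1 : 0 < 1 + c by rewrite ltr_wpDr.
have s0 : 0 < s by rewrite invr_gt0.
have ss : s^* = s by apply: geC0_conj; apply: ltW.
have sc : s * c = 1 - s.
  have : s * (1 + c) = 1 by rewrite mulVf // gt_eqF.
  by move=> e; rewrite -e; ring.
have := H (- (s * a^*)).
rewrite rmorphN rmorphM /= conjCK ss.
have -> : - (s * a^*) * a + - (s * a) * a^* + - (s * a) * - (s * a^*) * c
   = (a * a^* * s) * (s * c - 2) by ring.
rewrite sc.
have P0 : 0 <= a * a^* * s by rewrite -normCK mulr_ge0 ?exprn_ge0 // ltW.
have Q0 : 1 - s - 2 < 0.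
  have -> : 1 - s - 2 = - (1 + s) by ring.
  by rewrite oppr_lt0 ltr_wpDr // ltW.
move: P0; rewrite le0r => /orP [P0 _ | P0].
  move: P0; rewrite -normCK mulf_eq0 (gt_eqF s0) orbF expf_eq0 /= normr_eq0.
  by move/eqP.
move=> h; have : a * a^* * s * (1 - s - 2) < 0 by rewrite pmulr_rlt0.
by move/lt_geF; rewrite h.
Qed.

Definition form (C : numClosedFieldType) (T : finType) (X : op C T) (u w : T -> C) :=
  \sum_(x : T) \sum_(y : T) (u x)^* * X x y * w y.
Arguments form {C T}.

Lemma form_expand (C : numClosedFieldType) (T : finType) (X : op C T) (v w : T -> C) t :
  form X (fun z => v z + t * w z) (fun z => v z + t * w z) =
  form X v v + t * form X v w + t^* * form X w v + t^* * t * form X w w.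
Proof.
rewrite /form !mulr_sumr -!big_split /=; apply: eq_bigr => x _.
rewrite !mulr_sumr -!big_split /=; apply: eq_bigr => y _.
rewrite rmorphD rmorphM /=; ring.
Qed.

Lemma sum_delta (C : numClosedFieldType) (T : finType) (F : T -> C) p :
  \sum_(y : T) F y * (y == p)%:R = F p.
Proof.
rewrite (bigD1 p) //= eqxx mulr1 big1 ?addr0 // => y /negbTE ->; exact: mulr0.
Qed.

Lemma psd_null (C : numClosedFieldType) (T : finType) (X : op C T) (v : T -> C) :
  psd X -> form X v v = 0 -> forall y, \sum_(z : T) (v z)^* * X z y = 0.
Proof.
move=> hX hv y.
pose w := fun z : T => (z == y)%:R : C.
have -> : \sum_(z : T) (v z)^* * X z y = form X v w.
  rewrite /form; apply: eq_bigr => z _.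
  by rewrite (@sum_delta C T (fun y => (v z)^* * X z y)).
apply: (@key C _ (form X w v) (form X w w)); first exact: hX.
move=> t; have := hX (fun z => v z + t * w z).
by rewrite -/(form _ _ _) form_expand hv add0r.
Qed.

Lemma sum_comb (C : numClosedFieldType) (T : finType) (F : T -> C) p q e :
  \sum_(y : T) F y * ((y == p)%:R - e * (y == q)%:R) = F p - e * F q.
Proof.
under eq_bigr => y _ do rewrite mulrBr mulrCA.
by rewrite sumrB sum_delta -mulr_sumr sum_delta.
Qed.

Lemma sum_combl (C : numClosedFieldType) (T : finType) (F : T -> C) p q e :
  \sum_(y : T) ((y == p)%:R - e * (y == q)%:R) * F y = F p - e * F q.
Proof. by under eq_bigr => y _ do rewrite mulrC; rewrite sum_comb. Qed.

Theorem mainTheorem5 (C : numClosedFieldType) (n m : nat)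
  (rho : op C (ABC n m)) (eps : C) :
  is_state rho ->
  (eps = 1 \/ eps = -1) ->
  opmul (@flipAB C n) (ptraceC rho) = (fun x y => eps * ptraceC rho x y) ->
  opmul (@flipAB_idC C n m) rho = (fun x y => eps * rho x y).
Proof.
move=> [hpsd _] he hyp.
have ee : eps^* = eps by case: he => ->; rewrite ?conjC1 ?rmorphN1.
pose sw (p : AB n) : AB n := (p.2, p.1).
pose sg (x : ABC n m) : ABC n m := (sw x.1, x.2).
have hF : forall p y, ptraceC rho (sw p) y = eps * ptraceC rho p y.
  move=> p y; have := congr1 (fun f => f p y) hyp; rewrite /= /opmul => <-.
  rewrite -(@sum_delta C _ (fun z => ptraceC rho z y) (sw p)).
  apply: eq_bigr => z _; rewrite mulrC /flipAB.
  suff -> : (p == (z.2, z.1)) = (z == sw p) by [].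
  by case: p z => [a b] [a' b']; rewrite /sw /= !xpair_eqE andbC; congr (_ && _); apply: eq_sym.
pose v (x : ABC n m) := fun z : ABC n m => (z == sg x)%:R - eps * (z == x)%:R : C.
have vc : forall x z, (v x z)^* = v x z.
  by move=> x z; rewrite /v rmorphB rmorphM /= !conjC_nat ee.
have fv : forall x, form rho (v x) (v x) =
    (rho (sg x) (sg x) - eps * rho (sg x) x) - eps * (rho x (sg x) - eps * rho x x).
  move=> x; rewrite /form.
  transitivity (\sum_z v x z * (rho z (sg x) - eps * rho z x)).
    apply: eq_bigr => z _; rewrite vc -(@sum_comb C _ (rho z) (sg x) x eps) mulr_sumr.
    by apply: eq_bigr => y _; rewrite mulrA.
  by rewrite (@sum_combl C _ (fun z => rho z (sg x) - eps * rho z x)).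
have fsum : forall p, \sum_(c : 'I_m) form rho (v (p,c)) (v (p,c)) = 0.
  move=> p; under eq_bigr => c _ do rewrite fv.
  rewrite !sumrB -!mulr_sumr !sumrB -!mulr_sumr /=.
  have h1 := hF p (sw p); have h2 := hF p p; rewrite /ptraceC in h1 h2.
  rewrite h1 h2; ring.
have f0 : forall x, form rho (v x) (v x) = 0.
  move=> [p c]; apply: (psumr_eq0P _ (fsum p)) => // i _; exact: hpsd.
apply: functional_extensionality => x; apply: functional_extensionality => y.
have := @psd_null C _ rho (v x) hpsd (f0 x) y.
have -> : \sum_z (v x z)^* * rho z y = rho (sg x) y - eps * rho x y.
  by under eq_bigr => z _ do rewrite vc; exact: (@sum_combl C _ (fun z => rho z y)).
move=> /eqP; rewrite subr_eq0 => /eqP <-.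
rewrite /opmul -(@sum_delta C _ (fun z => rho z y) (sg x)).
apply: eq_bigr => z _; rewrite mulrC; congr (_ * _).
rewrite /flipAB_idC /flipAB -natrM mulnb.
suff -> : (x.1 == (z.1.2, z.1.1)) && (x.2 == z.2) = (z == sg x) by [].
case: x z => [[a b] c] [[a' b'] c']; rewrite /sg /sw /= !xpair_eqE.
by rewrite (eq_sym a) (eq_sym b) (eq_sym c) (andbC (b' == a)).
Qed.
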